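(* Let $A$ be a hyperoperator on $\mathbb{R}^n$ on the complex Banach space $X$, let $f\in\mathcal{E}(\mathbb{R}^n,\mathbb{R}^m)$, and let $X'=\{x\in D_A: f(a)x=0\}$ and $Y=\overline{X'}$. Then $Y$ is an $a$-invariant closed subspace of $X$ (in particular $a_j$ maps $X'$ into $X'$ and $A(\phi)Y\subset Y$ for all $\phi\in\mathcal{D}(\mathbb{R}^n)$), and the restriction $a'=a|_Y$ is a hyperoperator, i.e. $A'(\phi):=A(\phi)|_Y$ defines a hyperoperator on $\mathbb{R}^n$ on the Banach space $Y$. Moreover $D_{A'}=X'$ and $$\operatorname{int}\{f=0\}\cap\sigma(A)\subset\sigma(A')\subset\{f=0\}\cap\sigma(A).$$ If $\{f=0\}$ contains an open subset of $\mathbb{R}^n$ that meets $\sigma(A)$, then $Y\neq\{0\}$.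
   Context: $X$ is a complex Banach space, $L(X)$ the bounded operators. $\mathcal{D}(\mathbb{R}^n)=C_c^\infty(\mathbb{R}^n)$ (complex-valued); $\mathcal{E}(\mathbb{R}^n,\mathbb{R}^m)$ the smooth maps $\mathbb{R}^n\to\mathbb{R}^m$. A hyperoperator on $\mathbb{R}^n$ on a Banach space $Z$ is a linear map $B:\mathcal{D}(\mathbb{R}^n)\to L(Z)$, continuous ($B(\phi_j)\to0$ in operator norm when $\phi_j\to0$ in $\mathcal{D}(\mathbb{R}^n)$), multiplicative ($B(\phi\psi)=B(\phi)B(\psi)$), with (i) $D_B:=\bigcup_\phi\operatorname{Im}B(\phi)$ dense in $Z$ and (ii) $\bigcap_\phi\operatorname{Ker}B(\phi)=\{0\}$. For smooth $g:\mathbb{R}^n\to\mathbb{R}^k$ and $x\in D_A$ written $x=A(\phi)y$, $g(a)x:=A(g\phi)y$ (well defined, componentwise); $a_j:=g_j(a)$ with $g_j(\xi)=\xi_j$. $\sigma(A)$ denotes the support of $A$ as an $L(X)$-valued distribution; $\{f=0\}=f^{-1}(0)$. *)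

(* Defs.v *)
From HB Require Import structures.
From mathcomp Require Import all_boot all_order all_algebra.
From mathcomp Require Import all_classical all_reals all_analysis.
From mathcomp Require Import complex.
Set Implicit Arguments. Unset Strict Implicit. Unset Printing Implicit Defensive.
Import Order.TTheory GRing.Theory Num.Theory.
Import numFieldNormedType.Exports.
Local Open Scope ring_scope.
Local Open Scope classical_set_scope.

Section Hyper.
Variable R : realType.
Variable n : nat.
Notation pt := 'rV[R]_n.
Notation C := R[i].

Definition basis_vec (i : 'I_n) : pt := delta_mx ord0 i.

Definition iterD (s : seq 'I_n) (g : pt -> R) : pt -> R :=
  foldr (fun i h => fun x => 'D_(basis_vec i) h x) g s.

Definition smooth (g : pt -> R) : Prop :=
  forall s : seq 'I_n,
    continuous (iterD s g) /\ forall (i : 'I_n) (x : pt), derivable (iterD s g) x (basis_vec i).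

Definition csmooth (phi : pt -> C) : Prop :=
  smooth (fun x => complex.Re (phi x)) /\ smooth (fun x => complex.Im (phi x)).

Definition cD (s : seq 'I_n) (phi : pt -> C) : pt -> C :=
  fun x => Complex (iterD s (fun y => complex.Re (phi y)) x)
                   (iterD s (fun y => complex.Im (phi y)) x).

Definition fsupp (phi : pt -> C) : set pt := closure [set x | phi x != 0].

Definition test_fun (phi : pt -> C) : Prop := csmooth phi /\ compact (fsupp phi).

Definition Dcvg0 (phi : nat -> pt -> C) : Prop :=
  (forall k, test_fun (phi k)) /\
  (exists K : set pt, compact K /\ forall k, fsupp (phi k) `<=` K) /\
  (forall (s : seq 'I_n) (e : R), 0 < e ->
     exists N : nat, forall k, (N <= k)%N -> forall x, `|cD s (phi k) x| < (e%:C)%C).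

Definition rmul (g : pt -> R) (phi : pt -> C) : pt -> C :=
  fun x => ((g x)%:C)%C * phi x.

Definition closed_subspace (X : completeNormedModType C) (Y : set X) : Prop :=
  closed Y /\ Y 0 /\ (forall y z, Y y -> Y z -> Y (y + z)) /\
  (forall (c : C) y, Y y -> Y (c *: y)).

Definition DomH (X : completeNormedModType C) (Y : set X) (B : (pt -> C) -> X -> X)
  : set X := [set x | exists phi, test_fun phi /\ exists y, Y y /\ x = B phi y].

(* B(phi)|_Y, phi in D(R^n), is a hyperoperator on R^n on the Banach space Y
   (Y a closed subspace of X; Y = setT gives a hyperoperator on X). *)
Definition hyperop_on (X : completeNormedModType C) (Y : set X)
  (B : (pt -> C) -> X -> X) : Prop :=
  (forall phi, test_fun phi ->
     (forall y, Y y -> Y (B phi y)) /\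
     (forall (c : C) y z, Y y -> Y z -> B phi (c *: y + z) = c *: B phi y + B phi z) /\
     (exists M : R, forall y, Y y -> `|B phi y| <= (M%:C)%C * `|y|)) /\
  (forall (c : C) phi psi, test_fun phi -> test_fun psi ->
     forall y, Y y -> B (fun x => c * phi x + psi x) y = c *: B phi y + B psi y) /\
  (forall phik : nat -> pt -> C, Dcvg0 phik ->
     forall e : R, 0 < e -> exists N : nat, forall k, (N <= k)%N ->
       forall y, Y y -> `|B (phik k) y| <= (e%:C)%C * `|y|) /\
  (forall phi psi, test_fun phi -> test_fun psi ->
     forall y, Y y -> B (fun x => phi x * psi x) y = B phi (B psi y)) /\
  Y `<=` closure (DomH Y B) /\
  (forall y, Y y -> (forall phi, test_fun phi -> B phi y = 0) -> y = 0).

(* support sigma of B|_Y as an L(Y)-valued distribution *)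
Definition dsupp (X : completeNormedModType C) (Y : set X) (B : (pt -> C) -> X -> X)
  : set pt :=
  [set xi | forall U : set pt, open U -> U xi ->
     exists phi, test_fun phi /\ fsupp phi `<=` U /\ exists y, Y y /\ B phi y != 0].

(* X' = { x in D_A : f(a) x = 0 }, with f(a)(A(phi) y) := A(f phi) y componentwise *)
Definition Xprime (m : nat) (X : completeNormedModType C) (A : (pt -> C) -> X -> X)
  (f : pt -> 'rV[R]_m) : set X :=
  [set x | exists phi, test_fun phi /\ exists y,
     x = A phi y /\ forall j : 'I_m, A (rmul (fun z => f z ord0 j) phi) y = 0].

End Hyper.

(* Main.v *)
Require Import Defs.
From HB Require Import structures.
From mathcomp Require Import all_boot all_order all_algebra.
From mathcomp Require Import all_classical all_reals all_analysis.
From mathcomp Require Import complex.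
Import Order.TTheory GRing.Theory Num.Theory.
Import numFieldNormedType.Exports.
Local Open Scope ring_scope.
Local Open Scope classical_set_scope.
From mathcomp Require Import ring lra.
Set Implicit Arguments. Unset Strict Implicit. Unset Printing Implicit Defensive.

Section OneD.
Variable R : realType.

Definition EP (P : {poly R}) (t : R) : R :=
  if 0 < t then P.[t^-1] * expR (- t^-1) else 0.

Lemma EP_bound P : exists K : R, 0 <= K /\
  forall t, 0 < t -> t <= 1 -> `|P.[t^-1] * expR (- t^-1)| <= K * t.
Proof.
pose d := size P.
pose S := \sum_(i < d) `|P`_i|.
have S0 : 0 <= S by apply: sumr_ge0 => i _.
exists (S * (d.+1)`!%:R); split; first by apply: mulr_ge0.
move=> t t0 t1; set u := t^-1.
have u1 : 1 <= u by rewrite /u invf_ge1.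
have u0 : 0 < u by apply: lt_le_trans u1.
have hP : `|P.[u]| <= S * u ^+ d.
  rewrite horner_coef /S mulr_suml; apply: le_trans (ler_norm_sum _ _ _) _.
  apply: ler_sum => i _; rewrite normrM normrX (ger0_norm (ltW u0)).
  apply: ler_wpM2l => //; apply: ler_weXn2l => //; exact: ltnW (ltn_ord i).
have he : u ^+ d.+1 / (d.+1)`!%:R <= expR u.
  apply: le_trans (expR_ge1Dxn d (ltW u0)); rewrite lerDr //.
have F0 : 0 < (d.+1)`!%:R :> R by rewrite ltr0n fact_gt0.
have ud0 : 0 < u ^+ d.+1 / (d.+1)`!%:R by rewrite divr_gt0 // exprn_gt0.
rewrite normrM (ger0_norm (expR_ge0 _)) expRN.
apply: (@le_trans _ _ (S * u ^+ d * (u ^+ d.+1 / (d.+1)`!%:R)^-1)).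
  apply: ler_pM; [exact: normr_ge0| by rewrite invr_ge0 expR_ge0| exact: hP|].
  by rewrite lef_pV2 // ?posrE // expR_gt0.
have ud : u ^+ d != 0 by rewrite expf_neq0 // gt_eqF.
have -> : S * u ^+ d * (u ^+ d.+1 / (d.+1)`!%:R)^-1 = S * (d.+1)`!%:R * u^-1.
  by rewrite exprS; field; rewrite ud gt_eqF // gt_eqF.
by rewrite /u invrK.
Qed.

Lemma EP_small P : exists K : R, 0 <= K /\
  forall t, `|t| <= 1 -> `|EP P t| <= K * `|t|.
Proof.
have [K [K0 HK]] := EP_bound P; exists K; split => // t t1.
rewrite /EP; case: ifPn => [t0|_]; last by rewrite normr0 mulr_ge0.
rewrite (gtr0_norm t0); apply: HK => //.
by move: t1; rewrite (gtr0_norm t0).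
Qed.

Lemma EP_mulX P t : t^-1 * EP P t = EP (P * 'X) t.
Proof.
rewrite /EP; case: ifPn => [t0|_]; last by rewrite mulr0.
by rewrite hornerMX; ring.
Qed.

Lemma EP0 P : EP P 0 = 0.
Proof. by rewrite /EP ltxx. Qed.

Lemma EP_is_derive0 P : is_derive (0:R) 1 (EP P) 0.
Proof.
have [K [K0 HK]] := EP_small (P * 'X).
have cv : (fun h : R => h^-1 *: ((EP P \o shift 0) (h *: 1) - EP P 0)) @ 0^' --> (0:R).
  apply/cvgrPdist_lt => eps eps0.
  have e1 : 0 < Num.min 1 (eps / (K + 1)).
    by rewrite lt_min ltr01 divr_gt0 // ltr_wpDl.
  near=> h.
  have hn : `|h| < Num.min 1 (eps / (K + 1)) by near: h; exact: dnbhs0_lt.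
  have h0 : h != 0 by near: h; exact: nbhs_dnbhs_neq.
  rewrite /= EP0 subr0 sub0r normrN addr0 [_%:A]mulr1 -[_ *: _]/(h^-1 * EP P h) EP_mulX.
  move: hn; rewrite lt_min => /andP[h1 h2].
  apply: le_lt_trans (HK _ (ltW h1)) _.
  apply: le_lt_trans (_ : K * `|h| <= (K + 1) * `|h|) _.
    by apply: ler_wpM2r => //; rewrite lerDl.
  by rewrite mulrC -ltr_pdivlMr // ltr_wpDl.
split; first by apply/cvg_ex; exists 0.
exact: cvg_lim cv.
Unshelve. all: by end_near. Qed.


Definition DP (P : {poly R}) : {poly R} := (P - P^`()) * 'X^2.

Lemma EP_is_derive (P : {poly R}) (t : R) : is_derive t (1:R) (EP P) (EP (DP P) t).
Proof.
have [t0|tn0|->] := ltgtP t 0; last by rewrite EP0; exact: EP_is_derive0.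
- rewrite {2}/EP ltNge (ltW t0) /=.
  apply: near_eq_is_derive (is_derive_cst (0:R) t 1).
  near=> s; rewrite /EP ifF //; apply/negbTE; rewrite -leNgt ltW //.
  by near: s; exact: lt_nbhsl.
- have d1 : is_derive t 1 (fun s : R => s^-1) (- t ^- 2).
    have := @is_deriveV R id t 1 1 (lt0r_neq0 tn0) (is_derive_id _ _).
    by rewrite /= scaler1.
  have d2 : is_derive t 1 (horner P \o (fun s : R => s^-1)) ((P^`()).[t^-1] * - t ^- 2).
    exact: is_derive1_comp.
  have d3 : is_derive t 1 (fun s : R => - s^-1) (t ^- 2).
    by rewrite -[X in is_derive _ _ _ X]opprK; exact: is_deriveN.
  have d4 : is_derive t 1 (expR \o (fun s : R => - s^-1)) (expR (- t^-1) * t ^- 2).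
    exact: is_derive1_comp.
  have d5 := is_deriveM d2 d4.
  suff -> : EP (DP P) t = (horner P \o GRing.inv) t *: (expR (- t^-1) / t ^+ 2) +
       (expR \o (fun s : R => - s^-1)) t *: (P^`().[t^-1] * - t ^- 2).
    apply: near_eq_is_derive d5; near=> s.
    rewrite /EP ifT //; near: s; exact: lt_nbhsr.
  rewrite /EP tn0 /DP /= hornerM hornerXn hornerD hornerN.
  rewrite -![_ *: _]/(_ * _).
  by field; rewrite lt0r_neq0.
Unshelve. all: by end_near. Qed.
End OneD.

Lemma EP_scale (R : realType) (k : R) P t : EP (k *: P) t = k * EP P t.
Proof. by rewrite /EP; case: ifPn => _; rewrite ?mulr0 // hornerZ mulrA. Qed.

Lemma EP_derivable (R : realType) (P : {poly R}) t : derivable (EP P) t 1.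
Proof. by case: (EP_is_derive P t). Qed.

Section Smooth.
Variable R : realType.
Variable n : nat.
Local Notation pt := 'rV[R]_n.
Local Notation bv := (@basis_vec R n).

Lemma iterD_rcons s i (g : pt -> R) : Defs.iterD (rcons s i) g = Defs.iterD s ('D_(bv i) g).
Proof. by elim: s => //= j s ->. Qed.

Definition dgood (F : set (pt -> R)) := forall g, F g ->
  continuous g /\ (forall i x, derivable g x (bv i)) /\ (forall i, F ('D_(bv i) g)).

Lemma dgood_smooth F : dgood F -> forall g, F g -> smooth g.
Proof.
move=> hF g Fg s.
have : F (Defs.iterD s g) by elim: s => //= i s IH; exact: ((hF _ IH).2.2 i).
by case/hF => c [d _]; split.
Qed.

Lemma smooth_dgood : dgood (@smooth R n).
Proof.
move=> g sg; split; first exact: (sg [::]).1.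
split; first exact: (sg [::]).2.
move=> i s; rewrite -iterD_rcons; exact: sg.
Qed.

Lemma cont_add (f g : pt -> R) : continuous f -> continuous g -> continuous (fun x => f x + g x).
Proof. move=> cf cg x; exact: (continuousD (cf x) (cg x)). Qed.

Lemma cont_mul (f g : pt -> R) : continuous f -> continuous g -> continuous (fun x => f x * g x).
Proof. move=> cf cg x; exact: (continuousM (cf x) (cg x)). Qed.

Lemma der_add (f g : pt -> R) x v : derivable f x v -> derivable g x v ->
  derivable (fun y => f y + g y) x v /\ 'D_v (fun y => f y + g y) x = 'D_v f x + 'D_v g x.
Proof.
move=> df dg; have E : (f + g) = (fun y => f y + g y) by apply: funext.
by rewrite -E; split; [exact: (derivableD df dg) | exact: (deriveD df dg)].
Qed.

Lemma der_mul (f g : pt -> R) x v : derivable f x v -> derivable g x v ->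
  derivable (fun y => f y * g y) x v /\
  'D_v (fun y => f y * g y) x = f x * 'D_v g x + g x * 'D_v f x.
Proof.
move=> df dg; have E : (f * g) = (fun y => f y * g y) by apply: funext.
by rewrite -E; split; [exact: (derivableM df dg) | exact: (deriveM df dg)].
Qed.

Inductive span : (pt -> R) -> Prop :=
| span0 : span (fun _ => 0)
| spanC u v w : smooth u -> smooth v -> span w -> span (fun x => u x * v x + w x).

Lemma span_dgood : dgood span.
Proof.
move=> g; elim=> [|u v w su sv _ [cw [dw Dw]]].
  split; first by move=> x; exact: cst_continuous.
  split; first by move=> i x; exact: (derivable_cst (0:R)).
  move=> i; have -> : 'D_(bv i) (fun _ : pt => (0:R)) = fun _ => 0.
    by apply: funext => x; exact: (derive_cst (0:R)).
  exact: span0.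
have [cu [du Du]] := smooth_dgood su.
have [cv [dv Dv]] := smooth_dgood sv.
split; first by apply: cont_add => //; exact: cont_mul.
split; first by move=> i x; apply: (der_add _ (dw i x)).1; exact: (der_mul (du i x) (dv i x)).1.
move=> i.
have -> : 'D_(bv i) (fun x => u x * v x + w x) =
   fun x => u x * 'D_(bv i) v x + ('D_(bv i) u x * v x + 'D_(bv i) w x).
  apply: funext => x.
  have [d1 e1] := der_mul (du i x) (dv i x).
  rewrite (der_add d1 (dw i x)).2 e1; ring.
apply: (spanC su (Dv i)); exact: (spanC (Du i) sv).
Qed.

Lemma smooth_mul (u v : pt -> R) : smooth u -> smooth v -> smooth (fun x => u x * v x).
Proof.
move=> su sv; have -> : (fun x => u x * v x) = fun x => u x * v x + 0.
  by apply: funext => x; rewrite addr0.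
apply: (dgood_smooth span_dgood); exact: (spanC su sv span0).
Qed.

Lemma smooth_cst (c : R) : smooth (fun _ : pt => c).
Proof.
apply: (dgood_smooth (F := [set g | exists c : R, g = fun _ => c])); last by exists c.
move=> _ [d ->]; split; first by move=> x; exact: cst_continuous.
split; first by move=> i x; exact: (derivable_cst d).
move=> i; exists 0; apply: funext => x; exact: (derive_cst d).
Qed.

Lemma smooth_add (u v : pt -> R) : smooth u -> smooth v -> smooth (fun x => u x + v x).
Proof.
move=> su sv; have -> : (fun x => u x + v x) = fun x => u x * 1 + (v x * 1 + 0).
  by apply: funext => x; rewrite !mulr1 addr0.
apply: (dgood_smooth span_dgood).
exact: (spanC su (smooth_cst 1) (spanC sv (smooth_cst 1) span0)).
Qed.

Lemma smooth_scale (c : R) (u : pt -> R) : smooth u -> smooth (fun x => c * u x).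
Proof. move=> su; exact: (smooth_mul (smooth_cst c) su). Qed.

Lemma smooth_sub (u v : pt -> R) : smooth u -> smooth v -> smooth (fun x => u x - v x).
Proof.
move=> su sv; have -> : (fun x => u x - v x) = fun x => u x + (-1) * v x.
  by apply: funext => x; rewrite mulN1r.
exact: (smooth_add su (smooth_scale (-1) sv)).
Qed.


End Smooth.

Section Smooth2.
Variable R : realType.
Variable n : nat.
Local Notation pt := 'rV[R]_n.
Local Notation bv := (@basis_vec R n).

Lemma der_pow (f : pt -> R) k x v : derivable f x v ->
  derivable (fun y => f y ^+ k) x v /\
  'D_v (fun y => f y ^+ k) x = (k%:R * f x ^+ k.-1) * 'D_v f x.
Proof.
move=> df; have := is_deriveX k (derivableP df).
have -> : (f ^+ k) = (fun y => f y ^+ k) by apply: funext => y; rewrite exprfctE.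
by case.
Qed.

Lemma cont_pow (f : pt -> R) k : continuous f -> continuous (fun x => f x ^+ k).
Proof.
move=> cf; elim: k => [|k IH].
  have -> : (fun x : pt => f x ^+ 0) = fun _ => 1 by apply: funext => x; rewrite expr0.
  by move=> x; exact: cst_continuous.
have -> : (fun x : pt => f x ^+ k.+1) = fun x => f x * f x ^+ k by apply: funext => x; rewrite exprS.
exact: cont_mul.
Qed.

Lemma smooth_inv (g : pt -> R) : smooth g -> (forall x, g x != 0) ->
  smooth (fun x => (g x)^-1).
Proof.
move=> sg g0.
have [cg [dg Dg]] := smooth_dgood sg.
have cG : continuous (fun x => (g x)^-1) by move=> x; exact: continuousV (g0 x) (cg x).
have dG i x : derivable (fun y => (g y)^-1) x (bv i) by exact: derivableV (g0 x) (dg i x).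
pose F := [set w | exists u k, smooth u /\ w = fun x => u x * (g x)^-1 ^+ k].
have hF : dgood F; last first.
  apply: (dgood_smooth hF); exists (fun _ => 1), 1%N; split; first exact: smooth_cst.
  by apply: funext => x; rewrite mul1r expr1.
move=> _ [u [k [su ->]]].
have [cu [du Du]] := smooth_dgood su.
split; first by apply: cont_mul => //; exact: cont_pow.
split.
  move=> i x; apply: (der_mul (du i x) _).1; exact: (der_pow k (dG i x)).1.
move=> i.
exists (fun x => 'D_(bv i) u x * g x - k%:R * u x * 'D_(bv i) g x), k.+1; split.
  exact: (smooth_sub (smooth_mul (Du i) sg) (smooth_mul (smooth_scale k%:R su) (Dg i))).
apply: funext => x.
have [dp ep] := der_pow k (dG i x).
rewrite (der_mul (du i x) dp).2 ep (deriveV (g0 x) (dg i x)).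
have gx := g0 x.
rewrite -[_ *: _]/(_ * _) -exprVn.
move: ('D_(bv i) u x) ('D_(bv i) g x) (u x) => a b c.
case: k {dp ep} => [|k]; first by rewrite /= !expr0 !expr1; field.
rewrite /= !exprS; move: ((g x)^-1 ^+ k) => P.
by field.
Qed.

Lemma coord_is_derive (j : 'I_n) (x v : pt) : is_derive x v (fun y : pt => y ord0 j) (v ord0 j).
Proof.
have di := @derivable_id _ _ x v.
split; first exact: ((derivable_mxP id x v).1 di ord0 j).
have := derive_mx di; rewrite derive_id => /(congr1 (fun M : pt => M ord0 j)).
by rewrite mxE => <-.
Qed.

Lemma chain_coord (k : R -> R) (j : 'I_n) (x v : pt) dk :
  is_derive (x ord0 j) (1:R) k dk ->
  derivable (fun y : pt => k (y ord0 j)) x v /\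
  'D_v (fun y : pt => k (y ord0 j)) x = v ord0 j * dk /\
  {for x, continuous (fun y : pt => k (y ord0 j))}.
Proof.
move=> [dk1 <-].
have Dk : differentiable k (x ord0 j) by apply/derivable1_diffP.
have Dc : differentiable (fun y : pt => y ord0 j) x by exact: differentiable_coord.
have D : differentiable (k \o (fun y : pt => y ord0 j)) x by exact: differentiable_comp.
split; first by apply: diff_derivable; exact: D.
split; last exact: differentiable_continuous D.
have [_ cdv] := coord_is_derive j x v.
rewrite (deriveE v D) diff_comp //= -(deriveE v Dc) cdv.
rewrite (deriv1E dk1) /= derive1E; by rewrite -[_ *: _]/(_ * _) mulrC.
Qed.

End Smooth2.

Section Bump.
Variable R : realType.
Variable n : nat.
Local Notation pt := 'rV[R]_n.
Local Notation bv := (@basis_vec R n).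

Lemma affine_is_derive (s c t : R) : is_derive t (1:R) (fun u : R => s * u + c) s.
Proof.
have := is_deriveD (is_deriveZ s (is_derive_id t (1:R))) (is_derive_cst c t (1:R)).
have -> : s *: (@id R) + cst c = (fun u : R => s * u + c) by apply: funext.
by rewrite addr0 -[_ *: _]/(_ * _) mulr1.
Qed.

Lemma EPc_is_derive (P : {poly R}) s c (t : R) :
  is_derive t (1:R) (fun u : R => EP P (s * u + c)) (EP (DP P) (s * t + c) * s).
Proof.
have := is_derive1_comp (f:=EP P) (g:=fun u : R => s * u + c) (EP_is_derive P (s * t + c)) (affine_is_derive s c t).
by [].
Qed.

Lemma smooth_EPc (P : {poly R}) s c (j : 'I_n) :
  smooth (fun x : pt => EP P (s * x ord0 j + c)).
Proof.
pose F := [set h : pt -> R | exists P s c, h = fun x : pt => EP P (s * x ord0 j + c)].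
have hF : dgood F; last by apply: (dgood_smooth hF); exists P, s, c.
move=> _ [Q [s' [c' ->]]].
have H (x v : pt) := chain_coord (j:=j) (x:=x) v (EPc_is_derive Q s' c' (x ord0 j)).
split; first by move=> x; exact: (H x 0).2.2.
split; first by move=> i x; exact: (H x (bv i)).1.
move=> i; exists ((bv i ord0 j * s') *: DP Q), s', c'.
apply: funext => x; rewrite (H x (bv i)).2.1 EP_scale; ring.
Qed.

Lemma smooth_coord (j : 'I_n) : smooth (fun x : pt => x ord0 j).
Proof.
pose F := [set h : pt -> R | (h = fun x : pt => x ord0 j) \/ exists c : R, h = fun _ => c].
have hF : dgood F; last by apply: (dgood_smooth hF); left.
move=> _ [->|[c ->]].
- split.
    by move=> x; have := (chain_coord (j:=j) (x:=x) x (@is_derive_id _ _ (x ord0 j) (1:R))).2.2.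
  split; first by move=> i x; case: (coord_is_derive j x (bv i)).
  move=> i; right; exists (bv i ord0 j); apply: funext => x.
  by case: (coord_is_derive j x (bv i)).
- split; first by move=> x; exact: cst_continuous.
  split; first by move=> i x; exact: (derivable_cst c).
  move=> i; right; exists 0; apply: funext => x; exact: (derive_cst c).
Qed.

Lemma smooth_bigprod (I : Type) (r : seq I) (F : I -> pt -> R) :
  (forall i, smooth (F i)) -> smooth (fun x => \prod_(i <- r) F i x).
Proof.
move=> sF; elim: r => [|i r IH].
  have -> : (fun x : pt => \prod_(i <- [::]) F i x) = fun _ => 1.
    by apply: funext => x; rewrite big_nil.
  exact: smooth_cst.
have -> : (fun x : pt => \prod_(j <- i :: r) F j x) = fun x => F i x * \prod_(j <- r) F j x.
  by apply: funext => x; rewrite big_cons.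
exact: (smooth_mul (sF i) IH).
Qed.

Lemma smooth_bigsum (I : Type) (r : seq I) (F : I -> pt -> R) :
  (forall i, smooth (F i)) -> smooth (fun x => \sum_(i <- r) F i x).
Proof.
move=> sF; elim: r => [|i r IH].
  have -> : (fun x : pt => \sum_(i <- [::]) F i x) = fun _ => 0.
    by apply: funext => x; rewrite big_nil.
  exact: smooth_cst.
have -> : (fun x : pt => \sum_(j <- i :: r) F j x) = fun x => F i x + \sum_(j <- r) F j x.
  by apply: funext => x; rewrite big_cons.
exact: (smooth_add (sF i) IH).
Qed.


Lemma EP1_pos (t : R) : 0 < t -> 0 < EP (1 : {poly R}) t.
Proof. by move=> t0; rewrite /EP t0 hornerE mul1r expR_gt0. Qed.

Lemma EP1_ge0 (t : R) : 0 <= EP (1 : {poly R}) t.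
Proof. by rewrite /EP; case: ifPn => // _; rewrite hornerE mul1r expR_ge0. Qed.

Lemma EP1_neq0 (t : R) : EP (1 : {poly R}) t != 0 -> 0 < t.
Proof. by rewrite /EP; case: ifPn => //; rewrite eqxx. Qed.

Lemma EP1_eq0 (t : R) : t <= 0 -> EP (1 : {poly R}) t = 0.
Proof. by move=> t0; rewrite /EP ltNge t0. Qed.

Definition pc (c : pt) (b : R) (x : pt) : R :=
  \prod_(j < n) (EP 1 (1 * x ord0 j + (b - c ord0 j)) * EP 1 ((-1) * x ord0 j + (c ord0 j + b))).

Definition qc (c : pt) (a : R) (x : pt) : R :=
  \sum_(j < n) (EP 1 (1 * x ord0 j + (- a - c ord0 j)) + EP 1 ((-1) * x ord0 j + (c ord0 j - a))).

Definition rho (c : pt) (a b : R) (x : pt) : R := pc c b x * (pc c b x + qc c a x)^-1.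

Lemma smooth_pc (c : pt) (b : R) : smooth (pc c b).
Proof.
rewrite /pc; apply: smooth_bigprod => j.
exact: (smooth_mul (smooth_EPc _ _ _ _) (smooth_EPc _ _ _ _)).
Qed.

Lemma smooth_qc (c : pt) (a : R) : smooth (qc c a).
Proof.
rewrite /qc; apply: smooth_bigsum => j.
exact: (smooth_add (smooth_EPc _ _ _ _) (smooth_EPc _ _ _ _)).
Qed.

Lemma pc_ge0 (c : pt) (b : R) (x : pt) : 0 <= pc c b x.
Proof. by apply: prodr_ge0 => j _; apply: mulr_ge0; exact: EP1_ge0. Qed.

Lemma qc_ge0 (c : pt) (a : R) (x : pt) : 0 <= qc c a x.
Proof. by apply: sumr_ge0 => j _; apply: addr_ge0; exact: EP1_ge0. Qed.

Lemma pc_gt0 (c : pt) (b : R) (x : pt) : (forall j, `|x ord0 j - c ord0 j| < b) -> 0 < pc c b x.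
Proof.
move=> H; apply: prodr_gt0 => j _; have := H j; rewrite ltr_norml => /andP[h1 h2].
by apply: mulr_gt0; apply: EP1_pos; lra.
Qed.

Lemma pc_neq0 (c : pt) (b : R) (x : pt) : pc c b x != 0 -> forall j, `|x ord0 j - c ord0 j| < b.
Proof.
move=> H j; apply: contraNT H => hj; rewrite /pc (bigD1 j) //=.
move: hj; rewrite ltr_norml negb_and -!leNgt => /orP[h|h].
  by rewrite (@EP1_eq0 (1 * x ord0 j + (b - c ord0 j))) ?mul0r //; lra.
by rewrite (@EP1_eq0 ((-1) * x ord0 j + (c ord0 j + b))) ?mulr0 ?mul0r //; lra.
Qed.

Lemma qc_eq0 (c : pt) (a : R) (x : pt) : (forall j, `|x ord0 j - c ord0 j| <= a) -> qc c a x = 0.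
Proof.
move=> H; apply: big1 => j _; have := H j; rewrite ler_norml => /andP[h1 h2].
by rewrite !EP1_eq0 ?addr0 //; lra.
Qed.

Lemma qc_gt0 (c : pt) (a : R) (x : pt) (j : 'I_n) : a < `|x ord0 j - c ord0 j| -> 0 < qc c a x.
Proof.
move=> hj; rewrite /qc (bigD1 j) //=.
apply: (@lt_le_trans _ _ (EP 1 (1 * x ord0 j + (- a - c ord0 j)) + EP 1 ((-1) * x ord0 j + (c ord0 j - a)))).
  move: hj; rewrite ltr_normr => /orP[h|h].
    by apply: ltr_pwDl; [apply: EP1_pos; lra | exact: EP1_ge0].
  by apply: ltr_pwDr; [apply: EP1_pos; lra | exact: EP1_ge0].
rewrite lerDl; apply: sumr_ge0 => i _; apply: addr_ge0; exact: EP1_ge0.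
Qed.

Lemma pq_gt0 (c : pt) (a b : R) (x : pt) : a < b -> 0 < pc c b x + qc c a x.
Proof.
move=> ab.
have [H|H] := boolP [forall j, `|x ord0 j - c ord0 j| <= a].
  apply: ltr_pwDl; last exact: qc_ge0.
  apply: pc_gt0 => j; apply: le_lt_trans ab; exact: (forallP H j).
move: H; rewrite negb_forall => /existsP[j]; rewrite -ltNge => hj.
apply: ltr_pwDr; [exact: qc_gt0 hj | exact: pc_ge0].
Qed.

Lemma smooth_rho (c : pt) (a b : R) : a < b -> smooth (rho c a b).
Proof.
move=> ab; apply: (smooth_mul (smooth_pc c b)).
apply: smooth_inv; first exact: (smooth_add (smooth_pc c b) (smooth_qc c a)).
by move=> x; rewrite gt_eqF // pq_gt0.
Qed.

Lemma rho_one (c : pt) (a b : R) (x : pt) : a < b -> (forall j, `|x ord0 j - c ord0 j| <= a) -> rho c a b x = 1.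
Proof.
move=> ab H; rewrite /rho qc_eq0 // addr0 mulfV // gt_eqF // pc_gt0 // => j.
exact: le_lt_trans (H j) ab.
Qed.

Lemma rho_neq0 (c : pt) (a b : R) (x : pt) : rho c a b x != 0 -> forall j, `|x ord0 j - c ord0 j| < b.
Proof.
move=> H; apply: pc_neq0; apply/negP => /eqP p0; move: H; by rewrite /rho p0 mul0r eqxx.
Qed.

End Bump.

Section TestFun.
Variable R : realType.
Variable n : nat.
Local Notation pt := 'rV[R]_n.
Local Notation C := R[i].

Lemma ReM (z w : C) : complex.Re (z * w) = complex.Re z * complex.Re w - complex.Im z * complex.Im w.
Proof. by case: z => a b; case: w => c d. Qed.

Lemma ImM (z w : C) : complex.Im (z * w) = complex.Re z * complex.Im w + complex.Im z * complex.Re w.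
Proof. by case: z => a b; case: w => c d. Qed.

Lemma ReC (r : R) : complex.Re (r%:C)%C = r. Proof. by []. Qed.
Lemma ImC (r : R) : complex.Im (r%:C)%C = 0. Proof. by []. Qed.

Lemma fsupp_sub (phi psi : pt -> C) : (forall x, phi x != 0 -> psi x != 0) ->
  fsupp phi `<=` fsupp psi.
Proof. move=> H; apply: closureS => x; exact: H. Qed.

Lemma compact_fsupp_sub (phi psi : pt -> C) : (forall x, phi x != 0 -> psi x != 0) ->
  compact (fsupp psi) -> compact (fsupp phi).
Proof.
move=> H cp; apply: (subclosed_compact _ cp (fsupp_sub H)); exact: closed_closure.
Qed.

Lemma csmooth_mul (phi psi : pt -> C) : csmooth phi -> csmooth psi -> csmooth (fun x => phi x * psi x).
Proof.
move=> [p1 p2] [q1 q2]; split.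
  have -> : (fun x => complex.Re (phi x * psi x)) = fun x => complex.Re (phi x) * complex.Re (psi x) - complex.Im (phi x) * complex.Im (psi x).
    by apply: funext => x; rewrite ReM.
  exact: (smooth_sub (smooth_mul p1 q1) (smooth_mul p2 q2)).
have -> : (fun x => complex.Im (phi x * psi x)) = fun x => complex.Re (phi x) * complex.Im (psi x) + complex.Im (phi x) * complex.Re (psi x).
  by apply: funext => x; rewrite ImM.
exact: (smooth_add (smooth_mul p1 q2) (smooth_mul p2 q1)).
Qed.

Lemma csmooth_real (g : pt -> R) : smooth g -> csmooth (fun x => (g x)%:C%C).
Proof. by move=> sg; split => //=; exact: smooth_cst. Qed.

Lemma test_mul (phi psi : pt -> C) : test_fun phi -> csmooth psi -> test_fun (fun x => phi x * psi x).
Proof.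
move=> [sp cp] spsi; split; first exact: csmooth_mul.
apply: compact_fsupp_sub cp => x; apply: contraNneq => ->; by rewrite mul0r.
Qed.

Lemma test_mulr (phi psi : pt -> C) : csmooth phi -> test_fun psi -> test_fun (fun x => phi x * psi x).
Proof.
move=> sp [sq cq]; split; first exact: csmooth_mul.
apply: compact_fsupp_sub cq => x; apply: contraNneq => ->; by rewrite mulr0.
Qed.

Lemma test_rmul (g : pt -> R) (phi : pt -> C) : smooth g -> test_fun phi -> test_fun (rmul g phi).
Proof. move=> sg tp; exact: (test_mulr (csmooth_real sg) tp). Qed.

Lemma test0 : test_fun (fun _ : pt => 0 : C).
Proof.
split; first by split; exact: smooth_cst.
have -> : fsupp (fun _ : pt => 0 : C) = set0.
  rewrite /fsupp; have -> : [set x : pt | (0:C) != 0] = set0.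
    by apply/seteqP; split => x //=; rewrite eqxx.
  by rewrite closure0.
exact: compact0.
Qed.

End TestFun.

Section Cutoff.
Variable R : realType.
Variable n : nat.
Local Notation pt := 'rV[R]_n.
Local Notation C := R[i].

Lemma rV_norm_le (x : pt) (r : R) : 0 <= r -> (`|x| <= r) <-> (forall j, `|x ord0 j| <= r).
Proof.
move=> r0; rewrite /Num.norm /= mx_normrE; split.
  move=> H j; apply: le_trans H; exact: (le_bigmax _ (fun ij : 'I_1 * 'I_n => `|x ij.1 ij.2|) (ord0, j)).
move=> H; apply: bigmax_le => // [[i j]] _ /=; rewrite (ord1 i); exact: H.
Qed.

Lemma rV_norm_lt (x : pt) (r : R) : 0 < r -> (`|x| < r) <-> (forall j, `|x ord0 j| < r).
Proof.
move=> r0; rewrite /Num.norm /= mx_normrE; split.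
  move=> H j; apply: le_lt_trans H; exact: (le_bigmax _ (fun ij : 'I_1 * 'I_n => `|x ij.1 ij.2|) (ord0, j)).
move=> H; apply: bigmax_lt => // [[i j]] _ /=; rewrite (ord1 i); exact: H.
Qed.

Definition rhoC (c : pt) (a b : R) : pt -> C := fun x => (rho c a b x)%:C%C.

Lemma rhoC_prop (c : pt) (a b : R) : 0 < a -> a < b ->
  [/\ test_fun (rhoC c a b), (forall x, `|x - c| <= a -> rhoC c a b x = 1),
      (forall x, rhoC c a b x != 0 -> `|x - c| < b) &
      fsupp (rhoC c a b) `<=` [set x | `|c - x| <= b]].
Proof.
move=> a0 ab; have b0 : 0 < b by apply: lt_trans ab.
have H3 : forall x, rhoC c a b x != 0 -> `|x - c| < b.
  move=> x hx; apply/(rV_norm_lt _ b0) => j; rewrite !mxE.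
  apply: (@rho_neq0 _ _ c a b x); apply/negP => /eqP h; move: hx.
  have z : (0:R)%:C%C = 0 :> C by [].
  by rewrite /rhoC h z eqxx.
have H4 : fsupp (rhoC c a b) `<=` [set x | `|c - x| <= b].
  have cl : closed [set x : pt | `|c - x| <= b].
    by have := @closed_ball_closed R pt c b; rewrite closed_ballE.
  move=> x hx; rewrite ((closure_id _).1 cl); apply: (closureS _ hx) => y /H3 /ltW.
  by rewrite distrC.
split => //.
- split; first exact: csmooth_real (smooth_rho c ab).
  apply: (subclosed_compact _ _ H4); first exact: closed_closure.
  apply: bounded_closed_compact; last first.
    by have := @closed_ball_closed R pt c b; rewrite closed_ballE.
  rewrite /= /bounded_near; near=> M; move=> x /= hx.
  have : `|x| <= `|c| + b.
    have -> : x = c - (c - x) by rewrite opprB addrC subrK.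
    by apply: le_trans (ler_normB _ _) _; rewrite lerD2l.
  move/le_trans; apply; apply: ltW; near: M; apply: nbhs_pinfty_gt; exact: num_real.
- move=> x hx; rewrite /rhoC rho_one //.
  move=> j; have := (rV_norm_le _ (ltW a0)).1 hx j; by rewrite !mxE.
Unshelve. all: by end_near. Qed.


Lemma cutoff_compact (K : set pt) : compact K ->
  exists rh : pt -> C, test_fun rh /\ forall x, K x -> rh x = 1.
Proof.
move=> /compact_bounded [M [_ HM]].
have := HM (M + 1); rewrite ltrDl ltr01 => /(_ isT) HN.
set a := `|M + 1| + 1.
have a0 : 0 < a by rewrite /a ltr_pwDr // ltr01.
have ab : a < a + 1 by rewrite ltrDl ltr01.
have [t1 t2 _ _] := rhoC_prop 0 a0 ab.
exists (rhoC 0 a (a + 1)); split => // x Kx; apply: t2.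
rewrite subr0; apply: le_trans (HN x Kx) _; apply: le_trans (ler_norm _) _.
by rewrite /a lerDl ler01.
Qed.

Lemma cutoff_local (xi : pt) (V : set pt) : open V -> V xi ->
  exists r : R, 0 < r /\ exists rh : pt -> C, test_fun rh /\
    (forall x, `|x - xi| <= r -> rh x = 1) /\ fsupp rh `<=` V.
Proof.
move=> oV Vxi.
have /nbhs_ballP[e /= e0 sub] : nbhs xi V by apply: open_nbhs_nbhs; split.
have r0 : 0 < e / 4 by rewrite divr_gt0.
have rb : e / 4 < e / 2 by rewrite ltr_pM2l // ltf_pV2 ?posrE // ltr_nat.
have [t1 t2 _ t4] := rhoC_prop xi r0 rb.
exists (e / 4); split => //; exists (rhoC xi (e / 4) (e / 2)); split => //; split => //.
move=> x /t4 /= hx; apply: sub; rewrite mx_norm_ball /ball_ /=.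
by apply: le_lt_trans hx _; rewrite ltr_pdivrMr // ltr_pMr // ltr1n.
Qed.

End Cutoff.

Section NormedClosure.
Variable K : numFieldType.
Variable X : normedModType K.

Lemma ballE (x y : X) (e : K) : ball x e y = (`|x - y| < e).
Proof. by rewrite -ball_normE. Qed.

Lemma closure_ball (S : set X) (x : X) (e : K) : 0 < e -> closure S x ->
  exists a, S a /\ `|x - a| < e.
Proof.
move=> e0 cx; have [a [Sa ba]] := cx _ (@nbhsx_ballx _ _ x e e0).
by exists a; split => //; rewrite -ballE.
Qed.

Lemma ball_closure (S : set X) (x : X) :
  (forall e : K, 0 < e -> exists a, S a /\ `|x - a| < e) -> closure S x.
Proof.
move=> H B /nbhs_ballP [e /= e0 sub].
have [a [Sa ha]] := H e e0; exists a; split => //; apply: sub; by rewrite ballE.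
Qed.

Lemma closure_add (S : set X) : (forall x y, S x -> S y -> S (x + y)) ->
  forall x y, closure S x -> closure S y -> closure S (x + y).
Proof.
move=> hS x y cx cy; apply: ball_closure => e e0.
have e20 : 0 < e / 2 by rewrite divr_gt0.
have [a [Sa ha]] := closure_ball e20 cx.
have [b [Sb hb]] := closure_ball e20 cy.
exists (a + b); split; first exact: hS.
have -> : x + y - (a + b) = (x - a) + (y - b) by rewrite opprD addrACA.
apply: le_lt_trans (ler_normD _ _) _.
by rewrite [e]splitr; apply: ltrD.
Qed.

Lemma closure_scale (S : set X) : (forall c x, S x -> S (c *: x)) ->
  forall c x, closure S x -> closure S (c *: x).
Proof.
move=> hS c x cx; have [->|c0] := eqVneq c 0.
  have [a [Sa _]] := cx setT filterT.
  by rewrite scale0r; apply: subset_closure; rewrite -(scale0r a); exact: hS.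
apply: ball_closure => e e0.
have ce : 0 < e / `|c| by rewrite divr_gt0 // normr_gt0.
have [a [Sa ha]] := closure_ball ce cx.
exists (c *: a); split; first exact: hS.
rewrite -scalerBr normrZ mulrC -ltr_pdivlMr //; by rewrite normr_gt0.
Qed.

Lemma bounded_closure (T : X -> X) (M : K) (S : set X) : 0 <= M ->
  (forall y z, T (y - z) = T y - T z) -> (forall y, `|T y| <= M * `|y|) ->
  (forall x, S x -> T x = 0) -> forall y, closure S y -> T y = 0.
Proof.
move=> M0 Tl Tb TS y cy; apply/eqP/negPn/negP => Ty0.
set t := `|T y|; have t0 : 0 < t by rewrite normr_gt0.
set L := M + 1; have L0 : 0 < L by rewrite ltr_wpDl.
have e0 : 0 < t / (L * 2) by rewrite divr_gt0 // mulr_gt0.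
have [a [Sa ha]] := closure_ball e0 cy.
have : t <= M * `|y - a|.
  by rewrite /t -[T y]subr0 -(TS a Sa) -Tl; exact: Tb.
move=> h.
have : M * `|y - a| <= L * (t / (L * 2)).
  apply: ler_pM => //; last exact: ltW.
  by rewrite /L lerDl.
have -> : L * (t / (L * 2)) = t / 2 by field; rewrite gt_eqF.
move=> h2; have := le_trans h h2.
by rewrite ler_pdivlMr // ger_pMr // lt_geF // ltr1n.
Qed.

End NormedClosure.

Section Main.
Variable R : realType.
Variables n m : nat.
Variable X : completeNormedModType R[i].
Variable A : ('rV[R]_n -> R[i]) -> X -> X.
Variable f : 'rV[R]_n -> 'rV[R]_m.
Hypothesis HA : hyperop_on [set: X] A.
Hypothesis Hf : forall j : 'I_m, smooth (fun x => f x ord0 j).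
Local Notation pt := 'rV[R]_n.
Local Notation C := R[i].
Local Notation X' := (Xprime A f).
Local Notation fj j := (fun z : pt => f z ord0 j).

Lemma Alin phi : test_fun phi -> forall (c : C) y z, A phi (c *: y + z) = c *: A phi y + A phi z.
Proof. by move=> tp c y z; apply: (HA.1 phi tp).2.1. Qed.

Lemma Aadd phi : test_fun phi -> forall y z, A phi (y + z) = A phi y + A phi z.
Proof. by move=> tp y z; rewrite -[y in LHS]scale1r Alin // scale1r. Qed.

Lemma A0 phi : test_fun phi -> A phi 0 = 0.
Proof.
move=> tp; have h := Aadd tp 0 0; rewrite addr0 in h.
by apply: (@addrI _ (A phi 0)); rewrite -h addr0.
Qed.

Lemma Ascale phi : test_fun phi -> forall (c : C) y, A phi (c *: y) = c *: A phi y.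
Proof. by move=> tp c y; rewrite -[c *: y]addr0 Alin // A0 // addr0. Qed.

Lemma Asub phi : test_fun phi -> forall y z, A phi (y - z) = A phi y - A phi z.
Proof.
move=> tp y z; rewrite addrC -scaleN1r Alin // scaleN1r addrC //.
Qed.

Lemma Amul phi psi : test_fun phi -> test_fun psi -> forall y,
  A (fun x => phi x * psi x) y = A phi (A psi y).
Proof. by move=> tp tq y; apply: HA.2.2.2.1. Qed.

Lemma Azero y : A (fun _ => 0) y = 0.
Proof.
have := HA.2.1 1 _ _ (test0 R n) (test0 R n) y I.
have -> : (fun x : pt => (1 : C) * 0 + 0) = fun _ => 0 by apply: funext => x; rewrite mulr0 addr0.
rewrite scale1r => h.
by apply: (@addrI _ (A (fun _ => 0) y)); rewrite -h addr0.
Qed.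

Lemma Abound phi : test_fun phi -> exists M : C, 0 <= M /\ forall y, `|A phi y| <= M * `|y|.
Proof.
move=> tp; have [M HM] := (HA.1 phi tp).2.2.
exists (`|M|%:C)%C; split; first by rewrite lecR.
move=> y; apply: le_trans (HM y I) _; apply: ler_wpM2r => //.
by rewrite lecR ler_norm.
Qed.

Lemma Aker y : (forall phi, test_fun phi -> A phi y = 0) -> y = 0.
Proof. move=> H; exact: (HA.2.2.2.2.2 y I H). Qed.

Lemma test_fj (j : 'I_m) phi : test_fun phi -> test_fun (rmul (fj j) phi).
Proof. move=> tp; exact: test_rmul (Hf j) tp. Qed.

Lemma kill_X' x : X' x -> forall j g, test_fun g -> A (rmul (fj j) g) x = 0.
Proof.
move=> [phi [tp [y [-> hk]]]] j g tg.
rewrite -Amul //; last exact: test_fj.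
have -> : (fun z => rmul (fj j) g z * phi z) = fun z => g z * rmul (fj j) phi z.
  by apply: funext => z; rewrite /rmul; ring.
by rewrite Amul //; [rewrite hk A0 | exact: test_fj].
Qed.

Lemma kill_Y y : closure X' y -> forall j g, test_fun g -> A (rmul (fj j) g) y = 0.
Proof.
move=> cy j g tg.
have tq := test_fj j tg.
have [M [M0 HM]] := Abound tq.
apply: (bounded_closure M0 (Asub tq) HM _ cy) => x hx.
exact: kill_X' hx j g tg.
Qed.

Lemma Y_inv phi y : test_fun phi -> closure X' y -> X' (A phi y).
Proof.
move=> tp cy; exists phi; split => //; exists y; split => //.
move=> j; exact: kill_Y cy j phi tp.
Qed.

Lemma zero_fj (j : 'I_m) (phi : pt -> C) :
  (forall z, phi z != 0 -> f z = 0) -> rmul (fj j) phi = fun _ => 0.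
Proof.
move=> H; apply: funext => z; rewrite /rmul.
have [->|pz] := eqVneq (phi z) 0; first by rewrite mulr0.
by rewrite (H z pz) mxE mul0r.
Qed.


Lemma cut_eq (phi rh : pt -> C) : (forall z, fsupp phi z -> rh z = 1) ->
  (fun z => rh z * phi z) = phi.
Proof.
move=> H; apply: funext => z.
have [->|pz] := eqVneq (phi z) 0; first by rewrite mulr0.
by rewrite H ?mul1r //; apply: subset_closure.
Qed.

Lemma X'0 : X' 0.
Proof.
exists (fun _ => 0); split; first exact: test0.
exists 0; split; first by rewrite Azero.
move=> j; rewrite A0 //; exact: test_fj (test0 R n).
Qed.

Lemma X'add x1 x2 : X' x1 -> X' x2 -> X' (x1 + x2).
Proof.
move=> X1 X2; have K1 := kill_X' X1; have K2 := kill_X' X2.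
case: X1 => p1 [t1 [y1 [e1 _]]]; case: X2 => p2 [t2 [y2 [e2 _]]].
have [rh [trh hrh]] := cutoff_compact (compactU t1.2 t2.2).
have r1 : A rh x1 = x1.
  rewrite e1 -Amul // cut_eq // => z hz; apply: hrh; by left.
have r2 : A rh x2 = x2.
  rewrite e2 -Amul // cut_eq // => z hz; apply: hrh; by right.
exists rh; split => //; exists (x1 + x2); split; first by rewrite Aadd // r1 r2.
move=> j; rewrite Aadd; last exact: test_fj.
by rewrite K1 // K2 // addr0.
Qed.

Lemma X'scale (c : C) x : X' x -> X' (c *: x).
Proof.
move=> [p [tp [y [-> k]]]]; exists p; split => //; exists (c *: y); split.
  by rewrite Ascale.
by move=> j; rewrite Ascale ?k ?scaler0 //; exact: test_fj.
Qed.

Lemma Y_subspace : closed_subspace (closure X').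
Proof.
split; first exact: closed_closure.
split; first exact: subset_closure X'0.
split; first exact: closure_add X'add.
exact: closure_scale X'scale.
Qed.

Lemma part2 (j : 'I_n) phi y : test_fun phi -> X' (A phi y) ->
  X' (A (rmul (fun z => z ord0 j) phi) y).
Proof.
move=> tp Xp; have tq : test_fun (rmul (fun z => z ord0 j) phi).
  exact: test_rmul (smooth_coord R j) tp.
exists (rmul (fun z => z ord0 j) phi); split => //; exists y; split => //.
move=> k; apply: Aker => g tg.
rewrite -Amul //; last exact: test_fj.
have -> : (fun x => g x * rmul (fj k) (rmul (fun z => z ord0 j) phi) x) =
   fun x => rmul (fj k) (rmul (fun z => z ord0 j) g) x * phi x.
  by apply: funext => x; rewrite /rmul; ring.
rewrite Amul //; last by apply: test_fj; exact: test_rmul (smooth_coord R j) tg.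
by apply: kill_X' Xp k _ _; exact: test_rmul (smooth_coord R j) tg.
Qed.

Lemma part3 phi : test_fun phi -> A phi @` closure X' `<=` closure X'.
Proof. by move=> tp _ [y cy <-]; apply: subset_closure; exact: Y_inv. Qed.

Lemma part5 : DomH (closure X') A = X'.
Proof.
apply/seteqP; split.
  by move=> _ [phi [tp [y [cy ->]]]]; exact: Y_inv.
move=> x Xx; have Xx' := Xx; case: Xx' => p [tp [y [e _]]].
have [rh [trh hrh]] := cutoff_compact tp.2.
exists rh; split => //; exists x; split; first exact: subset_closure.
by rewrite e -Amul // cut_eq.
Qed.

Lemma part4 : hyperop_on (closure X') A.
Proof.
case: HA => H1 [H2 [H3 [H4 [H5 H6]]]].
split.
  move=> phi tp; split; first by move=> y cy; apply: (part3 tp); exists y.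
  split; first by move=> c y z _ _; exact: Alin.
  have [M HM] := (H1 phi tp).2.2; exists M => y _; exact: HM.
split; first by move=> c phi psi tp tq y _; exact: H2.
split.
  move=> phik hk e e0; have [N HN] := H3 phik hk e e0.
  by exists N => k kN y _; exact: HN.
split; first by move=> phi psi tp tq y _; exact: H4.
split; first by rewrite part5.
by move=> y _ hy; exact: H6.
Qed.


Lemma part6 : interior [set x | f x = 0] `&` dsupp [set: X] A `<=` dsupp (closure X') A.
Proof.
move=> xi [iZ sA] U oU Uxi.
set V := U `&` interior [set x | f x = 0].
have oV : open V by apply: openI => //; exact: open_interior.
have [r [r0 [rh [trh [h1 h2]]]]] := @cutoff_local R n xi V oV (conj Uxi iZ).
have [phi [tp [sp [y [_ Ay]]]]] := sA (ball xi r) (ball_open _ _) (ballxx _ r0).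
have hb : forall z, ball xi r z -> rh z = 1.
  by move=> z; rewrite ballE => hz; apply: h1; rewrite distrC; exact: ltW.
have rV : forall z, rh z != 0 -> V z by move=> z hz; apply: h2; exact: subset_closure.
exists phi; split => //; split.
  move=> z /sp bz; have [] : V z by apply: rV; rewrite hb // oner_neq0.
  by [].
exists (A rh y); split.
  apply: subset_closure; exists rh; split => //; exists y; split => //.
  move=> j; rewrite zero_fj ?Azero // => z hz.
  by have [_ /interior_subset] := rV z hz.
rewrite -Amul // (_ : (fun z => phi z * rh z) = phi) //.
apply: funext => z; have [->|pz] := eqVneq (phi z) 0; first by rewrite mul0r.
by rewrite hb ?mulr1 //; apply: sp; exact: subset_closure.
Qed.

Lemma part8 : (exists U : set pt, open U /\ U `<=` [set x | f x = 0] /\ U `&` dsupp [set: X] A !=set0) ->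
  closure X' <> [set 0].
Proof.
move=> [U [oU [UZ [xi [Uxi sA]]]]] HY.
have [phi [tp [sp [y [_ Ay]]]]] := sA U oU Uxi.
have : closure X' (A phi y).
  apply: subset_closure; exists phi; split => //; exists y; split => //.
  move=> j; rewrite zero_fj ?Azero // => z pz; apply: UZ; apply: sp; exact: subset_closure.
by rewrite HY => /= h; rewrite h eqxx in Ay.
Qed.


Lemma part7 : dsupp (closure X') A `<=` [set x | f x = 0] `&` dsupp [set: X] A.
Proof.
move=> xi sY; split; last first.
  move=> U oU Ux; have [phi [tp [sp [y [_ Ay]]]]] := sY U oU Ux.
  by exists phi; split => //; split => //; exists y.
apply/eqP/negPn/negP => fxi.
have /existsP [j hj] : [exists j : 'I_m, f xi ord0 j != 0].
  rewrite -negb_forall; apply: contra fxi => /forallP H.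
  by apply/eqP/rowP => k; rewrite mxE; exact/eqP.
have cf : continuous (fj j) := (Hf j [::]).1.
have : \forall z \near xi, `|fj j xi - fj j z| < `|fj j xi|.
  by move/cvgrPdist_lt : (cf xi); apply; rewrite normr_gt0.
case/nbhs_ballP => e /= e0 sub.
set r := e / 2.
have r0 : 0 < r by rewrite divr_gt0.
have re : r < e by rewrite /r ltr_pdivrMr // ltr_pMr // ltr1n.
have fz : forall z : pt, `|z - xi| <= r -> fj j z != 0.
  move=> z hz; apply/eqP => h.
  have : ball xi e z by rewrite ballE distrC; exact: le_lt_trans hz re.
  by move/sub; rewrite /= h subr0 ltxx.
pose F := fun z : pt => fj j z * fj j z + qc xi r z.
have sF : smooth F := smooth_add (smooth_mul (Hf j) (Hf j)) (smooth_qc xi r).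
have Fn0 : forall z, F z != 0.
  move=> z; rewrite /F; apply: lt0r_neq0.
  have [H|H] := boolP [forall k, `|z ord0 k - xi ord0 k| <= r].
    rewrite qc_eq0; last by move=> k; exact: (forallP H k).
    rewrite addr0 -expr2 exprn_even_gt0 //; apply: fz.
    by apply/(rV_norm_le _ (ltW r0)) => k; rewrite !mxE; exact: (forallP H k).
  move: H; rewrite negb_forall => /existsP[k]; rewrite -ltNge => hk.
  by apply: ltr_wpDl; [rewrite -expr2 sqr_ge0 | exact: qc_gt0 hk].
have [phi [tp [sp [y [cy Ay]]]]] := sY (ball xi r) (ball_open _ _) (ballxx _ r0).
pose q := rmul (fun z => fj j z * (F z)^-1) phi.
have tq : test_fun q := test_rmul (smooth_mul (Hf j) (smooth_inv sF Fn0)) tp.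
have eq : rmul (fj j) q = phi.
  apply: funext => z; rewrite /q /rmul.
  have [->|pz] := eqVneq (phi z) 0; first by rewrite !mulr0.
  have bz : `|z - xi| <= r.
    have hz : fsupp phi z by apply: subset_closure.
    by have := sp z hz; rewrite ballE distrC => /ltW.
  have qz : qc xi r z = 0.
    apply: qc_eq0 => k; have := (rV_norm_le _ (ltW r0)).1 bz k; by rewrite !mxE.
  rewrite mulrA -rmorphM /F qz addr0.
  have -> : fj j z * (fj j z * (fj j z * fj j z)^-1) = 1.
    by have := fz z bz; move=> h; field.
  by rewrite mul1r.
move: Ay; rewrite -eq (kill_Y cy j tq) eqxx.
by [].
Qed.

End Main.

Theorem proposition9p1 (R : realType) (n m : nat)
  (X : completeNormedModType R[i])
  (A : ('rV[R]_n -> R[i]) -> X -> X) (f : 'rV[R]_n -> 'rV[R]_m) :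
  hyperop_on [set: X] A ->
  (forall j : 'I_m, smooth (fun x => f x ord0 j)) ->
  let X' := Xprime A f in
  let Y := closure X' in
  let Z := [set x | f x = 0] in
  closed_subspace Y /\
      (forall (j : 'I_n) phi y, test_fun phi -> X' (A phi y) ->
          X' (A (rmul (fun z => z ord0 j) phi) y)) /\
      (forall phi, test_fun phi -> A phi @` Y `<=` Y) /\
      hyperop_on Y A /\
      DomH Y A = X' /\
      interior Z `&` dsupp [set: X] A `<=` dsupp Y A /\
      dsupp Y A `<=` Z `&` dsupp [set: X] A /\
      ((exists U : set 'rV[R]_n, open U /\ U `<=` Z /\ U `&` dsupp [set: X] A !=set0) ->
         Y <> [set 0]).
Proof.
move=> HA Hf X' Y Z.
split; first exact: (Y_subspace HA Hf).
split; first by move=> j phi y tp; exact: (part2 HA Hf).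
split; first by move=> phi tp; exact: (part3 HA Hf tp).
split; first exact: (part4 HA Hf).
split; first exact: (part5 HA Hf).
split; first by apply: part6.
split; first by apply: part7.
by apply: part8.
Qed.
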